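(* Consider the two-player non-cooperative pricing game between two multi-homing mobile devices (MMD relays) $r_1,r_2$, in which the strategy of player $r_i$ is its charging price $p_{r_i}\in[0,+\infty)$ and, with the offered bandwidths $\omega_1,\omega_2>0$ held fixed, the utility of player $r_i$ ($i\in\{1,2\}$, $j\neq i$) is $$U_i(p_{r_i},p_{r_j}) \;=\; p_{r_i}\cdot \frac{n}{1+2^{\,p_{r_i}-p_{r_j}}\,\dfrac{\omega_j Y_j}{\omega_i Y_i}} \;-\; c_i\,\omega_i .$$ Then this game has a unique Nash equilibrium.
   Context: Here $n>0$ is the total number of ordinary mobile devices (OMDs), and the fraction expression is the number of OMDs attached to $r_i$ at the evolutionary equilibrium of the OMDs' relay-selection game. $c_i\ge 0$ is the relay cost of $r_i$ per unit bandwidth. $Y_i=\max\{\tau_i,b_i\}>0$ with $b_i=1+SNR_{s_i d_i}$, $\tau_i=1+SNR_{s_i d_i}+SNR_{s_i r_i d_i}$, $SNR_{s_i d_i}=P|h_{s_id_i}|^2/\sigma^2$, $SNR_{s_ir_id_i}=\frac{P^2|h_{s_ir_i}|^2|h_{r_id_i}|^2}{\sigma^2(\sigma^2+P|h_{s_ir_i}|^2+P|h_{r_id_i}|^2)}$ (transmit power $P>0$, noise variance $\sigma^2>0$, channel gains $h$ between source $s_i$, relay $r_i$, destination $d_i$). A Nash equilibrium is a pair $(p_{r_1}^*,p_{r_2}^* )$ such that for each $i$, $U_i(p_{r_i}^*,p_{r_j}^* )\ge U_i(p_{r_i},p_{r_j}^* )$ for all $p_{r_i}\ge 0$. *)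

(* Defs.v *)
From Stdlib Require Import Reals.
From Coquelicot Require Import Coquelicot.
Open Scope R_scope.

Definition SNR_sd (P sigma2 : R) (h_sd : C) : R :=
  P * (Cmod h_sd) ^ 2 / sigma2.

Definition SNR_srd (P sigma2 : R) (h_sr h_rd : C) : R :=
  (P ^ 2 * (Cmod h_sr) ^ 2 * (Cmod h_rd) ^ 2)
  / (sigma2 * (sigma2 + P * (Cmod h_sr) ^ 2 + P * (Cmod h_rd) ^ 2)).

Definition b_i (P sigma2 : R) (h_sd : C) : R := 1 + SNR_sd P sigma2 h_sd.

Definition tau_i (P sigma2 : R) (h_sd h_sr h_rd : C) : R :=
  1 + SNR_sd P sigma2 h_sd + SNR_srd P sigma2 h_sr h_rd.

Definition Y_i (P sigma2 : R) (h_sd h_sr h_rd : C) : R :=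
  Rmax (tau_i P sigma2 h_sd h_sr h_rd) (b_i P sigma2 h_sd).

Definition utility (n c_i w_i Y_i w_j Y_j p_i p_j : R) : R :=
  p_i * (n / (1 + Rpower 2 (p_i - p_j) * ((w_j * Y_j) / (w_i * Y_i)))) - c_i * w_i.

Definition is_NE (U1 U2 : R -> R -> R) (p : R * R) : Prop :=
  0 <= fst p /\ 0 <= snd p /\
  (forall q, 0 <= q -> U1 q (snd p) <= U1 (fst p) (snd p)) /\
  (forall q, 0 <= q -> U2 q (fst p) <= U2 (snd p) (fst p)).

(* Main.v *)
Require Import Defs.
From Stdlib Require Import Reals.
From Coquelicot Require Import Coquelicot.
From Stdlib Require Import Lra Psatz.
Open Scope R_scope.

Definition Gf (l a p q : R) : R := exp ((q - p) * l) * a.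

Lemma exp_ge (y : R) : 1 + y <= exp y.
Proof.
  destruct (Req_dec y 0) as [->|H].
  - rewrite exp_0; lra.
  - left; now apply exp_ineq1.
Qed.

Lemma div_lt_helper q qs D E : 0 < D -> 0 < E -> q * E < qs * D -> q / D < qs / E.
Proof.
  intros HD HE H.
  replace (q / D) with ((q * E) * (/ D * / E)) by (field; lra).
  replace (qs / E) with ((qs * D) * (/ D * / E)) by (field; lra).
  apply Rmult_lt_compat_r; [|exact H].
  apply Rmult_lt_0_compat; apply Rinv_0_lt_compat; lra.
Qed.

Lemma Gf_pos l a p q : 0 < a -> 0 < Gf l a p q.
Proof. intros; unfold Gf; apply Rmult_lt_0_compat; [apply exp_pos|lra]. Qed.

Lemma foc_max l a p qs q : 0 < l -> 0 < a ->
  1 + Gf l a p qs = l * qs * Gf l a p qs -> q <> qs ->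
  q / (1 + Gf l a p q) < qs / (1 + Gf l a p qs).
Proof.
  intros hl ha foc hne.
  assert (Hq : Gf l a p q = Gf l a p qs * exp ((q - qs) * l)).
  { unfold Gf. replace ((q - p) * l) with ((qs - p) * l + (q - qs) * l) by ring.
    rewrite exp_plus; ring. }
  assert (He : 1 + (q - qs) * l < exp ((q - qs) * l)).
  { apply exp_ineq1. intro h. apply Rmult_integral in h. destruct h; [apply hne|]; lra. }
  pose proof (Gf_pos l a p qs ha) as Gs. pose proof (Gf_pos l a p q ha) as Gq.
  set (A := Gf l a p qs) in *. set (B := Gf l a p q) in *.
  set (E := exp ((q - qs) * l)) in *.
  assert (hlA : 0 < l * A) by (apply Rmult_lt_0_compat; lra).
  assert (hqs : 0 < qs).
  { destruct (Rle_lt_dec qs 0) as [h|h]; [|exact h].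
    assert (qs * (l * A) <= 0) by (apply Rmult_le_0_r; lra). exfalso.
    replace (l * qs * A) with (qs * (l * A)) in foc by ring. lra. }
  assert (Hk : A * (1 + (q - qs) * l) < B) by (rewrite Hq; apply Rmult_lt_compat_l; lra).
  apply div_lt_helper; try lra.
  rewrite foc.
  assert (l * q * A < 1 + B) by nra.
  nra.
Qed.

Lemma foc_exists l a p : 0 < l -> 0 < a ->
  exists qs, 0 <= qs /\ 1 + Gf l a p qs = l * qs * Gf l a p qs.
Proof.
  intros hl ha.
  set (q1 := Rmax p 0 + (2 + / a) / l).
  assert (hm1 : p <= Rmax p 0) by apply Rmax_l.
  assert (hm2 : 0 <= Rmax p 0) by apply Rmax_r.
  assert (hia : 0 < / a) by (apply Rinv_0_lt_compat; lra).
  assert (hd : 0 < (2 + / a) / l) by (apply Rdiv_lt_0_compat; lra).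
  assert (hlq : l * q1 = l * Rmax p 0 + (2 + / a)) by (unfold q1; field; lra).
  assert (hlq2 : 2 + / a <= l * q1) by nra.
  assert (hG : a <= Gf l a p q1).
  { unfold Gf. pose proof (exp_ge ((q1 - p) * l)).
    assert (0 <= (q1 - p) * l) by (unfold q1; nra). nra. }
  assert (haa : a * / a = 1) by (field; lra).
  destruct (IVT (fun q => - (1 + exp ((q - p) * l) * a * (1 - l * q))) 0 q1)
    as [z [[hz0 hz1] hz]].
  - apply derivable_continuous; reg.
  - unfold q1; lra.
  - pose proof (exp_pos ((0 - p) * l)). nra.
  - fold (Gf l a p q1). nra.
  - exists z; split; [lra|]. fold (Gf l a p z) in hz. lra.
Qed.

Lemma utility_eq n c w Y w' Y' q p :
  utility n c w Y w' Y' q p = n * (q / (1 + Gf (ln 2) (w' * Y' / (w * Y)) p q)) - c * w.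
Proof. unfold utility, Gf, Rpower. unfold Rdiv. ring. Qed.

Lemma Y_ge1 P s h1 h2 h3 : 0 < P -> 0 < s -> 1 <= Y_i P s h1 h2 h3.
Proof.
  intros hP hs. unfold Y_i. eapply Rle_trans; [|apply Rmax_r].
  unfold b_i, SNR_sd. assert (0 <= P * Cmod h1 ^ 2 / s).
  { unfold Rdiv. apply Rmult_le_pos; [apply Rmult_le_pos; [lra|apply pow2_ge_0]|].
    left; apply Rinv_0_lt_compat; lra. }
  lra.
Qed.

Lemma ln2_pos : 0 < ln 2.
Proof. pose proof ln_lt_2. assert (0 < / 2) by lra. lra. Qed.

Lemma Hmono s t : s < t -> s + exp s - exp (- s) < t + exp t - exp (- t).
Proof.
  intros h. pose proof (exp_increasing _ _ h).
  assert (exp (- t) < exp (- s)) by (apply exp_increasing; lra). lra.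
Qed.

Theorem theorem2
  (n : R) (hn : 0 < n)
  (c1 c2 : R) (hc1 : 0 <= c1) (hc2 : 0 <= c2)
  (w1 w2 : R) (hw1 : 0 < w1) (hw2 : 0 < w2)
  (P sigma2 : R) (hP : 0 < P) (hsigma : 0 < sigma2)
  (h_s1d1 h_s1r1 h_r1d1 h_s2d2 h_s2r2 h_r2d2 : C) :
  let Y1 := Y_i P sigma2 h_s1d1 h_s1r1 h_r1d1 in
  let Y2 := Y_i P sigma2 h_s2d2 h_s2r2 h_r2d2 in
  let U1 := utility n c1 w1 Y1 w2 Y2 in
  let U2 := utility n c2 w2 Y2 w1 Y1 in
  exists! p : R * R, is_NE U1 U2 p.
Proof.
  intros Y1 Y2 U1 U2.
  assert (hY1 : 1 <= Y1) by (apply Y_ge1; lra).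
  assert (hY2 : 1 <= Y2) by (apply Y_ge1; lra).
  set (a := w2 * Y2 / (w1 * Y1)).
  set (b := w1 * Y1 / (w2 * Y2)).
  assert (ha : 0 < a) by (unfold a; apply Rdiv_lt_0_compat; nra).
  assert (hb : b = / a) by (unfold a, b; field; split; nra).
  assert (hbp : 0 < b) by (rewrite hb; apply Rinv_0_lt_compat; lra).
  set (l := ln 2).
  assert (hl : 0 < l) by apply ln2_pos.
  assert (hU1 : forall q p, U1 q p = n * (q / (1 + Gf l a p q)) - c1 * w1)
    by (intros; apply utility_eq).
  assert (hU2 : forall q p, U2 q p = n * (q / (1 + Gf l b p q)) - c2 * w2)
    by (intros; apply utility_eq).
  assert (BR : forall a0 (U : R -> R -> R) c w, 0 < a0 ->
            (forall q p, U q p = n * (q / (1 + Gf l a0 p q)) - c * w) ->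
            forall p qs, 1 + Gf l a0 p qs = l * qs * Gf l a0 p qs ->
            forall q, U q p <= U qs p).
  { intros a0 U c w ha0 hU p qs foc q. rewrite !hU.
    destruct (Req_dec q qs) as [->|hne]; [lra|].
    pose proof (foc_max l a0 p qs q hl ha0 foc hne). nra. }
  assert (FOC : forall a0 (U : R -> R -> R) c w, 0 < a0 ->
            (forall q p, U q p = n * (q / (1 + Gf l a0 p q)) - c * w) ->
            forall p p0, (forall q, 0 <= q -> U q p <= U p0 p) ->
            1 + Gf l a0 p p0 = l * p0 * Gf l a0 p p0).
  { intros a0 U c w ha0 hU p p0 hmax.
    destruct (foc_exists l a0 p hl ha0) as [qs [hqs foc]].
    destruct (Req_dec p0 qs) as [->|hne]; [exact foc|].
    exfalso. pose proof (foc_max l a0 p qs p0 hl ha0 foc hne).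
    specialize (hmax qs hqs). rewrite !hU in hmax. nra. }
  set (f := fun s => s + exp s - exp (- s)).
  assert (CH : forall p1 p2, is_NE U1 U2 (p1, p2) ->
     exists s, f s = ln a /\ p1 = (1 + exp s) / (l * exp s) /\ p2 = (1 + exp s) / l).
  { intros p1 p2 [_ [_ [h1 h2]]]. simpl in h1, h2.
    pose proof (FOC a U1 c1 w1 ha hU1 p2 p1 h1) as F1.
    pose proof (FOC b U2 c2 w2 hbp hU2 p1 p2 h2) as F2.
    set (x := Gf l a p2 p1) in *.
    assert (hx : 0 < x) by (apply Gf_pos; lra).
    assert (hx2 : Gf l b p1 p2 = / x).
    { unfold x, Gf. rewrite hb. replace ((p2 - p1) * l) with (- ((p1 - p2) * l)) by ring.
      rewrite exp_Ropp. pose proof (exp_pos ((p1 - p2) * l)). field. lra. }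
    rewrite hx2 in F2.
    assert (e2 : l * p2 = 1 + x).
    { replace (l * p2) with (l * p2 * / x * x) by (field; lra). rewrite <- F2. field. lra. }
    assert (e3 : (p1 - p2) * l = / x - x).
    { apply Rmult_eq_reg_r with x; [|lra]. field_simplify; [|lra]. nra. }
    exists (ln x). rewrite exp_ln by lra. split; [|split].
    - unfold f. rewrite exp_ln by lra. rewrite exp_Ropp, exp_ln by lra.
      unfold x at 1, Gf. rewrite ln_mult by (try apply exp_pos; lra).
      rewrite ln_exp. rewrite e3. ring.
    - apply Rmult_eq_reg_r with (l * x); [|nra]. field_simplify; [|lra]. nra.
    - apply Rmult_eq_reg_r with l; [|lra]. field_simplify; lra. }
  set (L := ln a).
  destruct (IVT (fun s => s + exp s - exp (- s) - L) (- Rabs L - 1) (Rabs L + 1))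
    as [s [_ hs]].
  - apply derivable_continuous; reg.
  - pose proof (Rabs_pos L); lra.
  - assert (exp (- Rabs L - 1) < exp (- (- Rabs L - 1)))
      by (apply exp_increasing; pose proof (Rabs_pos L); lra).
    pose proof (Rle_abs (- L)). rewrite Rabs_Ropp in H0. lra.
  - assert (exp (- (Rabs L + 1)) < exp (Rabs L + 1))
      by (apply exp_increasing; pose proof (Rabs_pos L); lra).
    pose proof (Rle_abs L). lra.
  - set (x := exp s).
    assert (hx : 0 < x) by apply exp_pos.
    set (p1 := (1 + x) / (l * x)). set (p2 := (1 + x) / l).
    assert (hs' : s + x - / x = L) by (unfold x; rewrite <- exp_Ropp; lra).
    assert (e3 : (p1 - p2) * l = / x - x) by (unfold p1, p2; field; lra).
    assert (G1 : Gf l a p2 p1 = x).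
    { unfold Gf. rewrite e3. replace (/ x - x) with (s + - L) by lra.
      rewrite exp_plus, exp_Ropp. unfold L. rewrite exp_ln by lra. fold x. field. lra. }
    assert (G2 : Gf l b p1 p2 = / x).
    { unfold Gf. replace ((p2 - p1) * l) with (- s + L) by lra.
      rewrite exp_plus, exp_Ropp. unfold L. rewrite exp_ln by lra. fold x.
      rewrite hb. field. lra. }
    exists (p1, p2). split.
    + split; [|split; [|split]]; simpl.
      * unfold p1. left. apply Rdiv_lt_0_compat; nra.
      * unfold p2. left. apply Rdiv_lt_0_compat; nra.
      * intros q _. apply (BR a U1 c1 w1 ha hU1). rewrite G1. unfold p1. field. lra.
      * intros q _. apply (BR b U2 c2 w2 hbp hU2). rewrite G2. unfold p2. field. lra.
    + intros [q1 q2] hNE.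
      destruct (CH q1 q2 hNE) as [t [ht [-> ->]]].
      assert (t = s).
      { destruct (Rtotal_order t s) as [h|[h|h]]; [|exact h|];
          [pose proof (Hmono t s h)|pose proof (Hmono s t h)]; unfold f in ht; cbv beta in hs; unfold L in *; lra. }
      subst t. reflexivity.
Qed.
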